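(* Let $\beta_2\in(0,1)$, $\epsilon>0$, and let $g_1,g_2,\dots$ be random vectors in $\mathbb{R}^D$ with $\mathbb{E}\|g_t\|^2\le G^2$ for all $t\ge1$. Define $v_0=0$, $v_t=\beta_2v_{t-1}+(1-\beta_2)g_t\odot g_t$ for $t\ge1$. Then for every $T\ge1$, $$\sum_{t=1}^T\mathbb{E}\left[\left\|\frac{g_t}{\sqrt{v_t+\epsilon^2}}\right\|^2\right]\le\frac{D}{1-\beta_2}\left(\log\Big(1+\frac{(1-\beta_2^T)G^2}{\epsilon^2}\Big)-T\log\beta_2\right).$$
   Context: $\odot$, square root, division and addition of a scalar act elementwise; norms are Euclidean. These are the second-moment estimates of RMSprop. *)

(* Defs.v *)
From HB Require Import structures.
From mathcomp Require Import all_boot all_order all_algebra.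
From mathcomp Require Import all_classical all_reals all_analysis.
Set Implicit Arguments. Unset Strict Implicit. Unset Printing Implicit Defensive.
Import Order.TTheory GRing.Theory Num.Theory.
Local Open Scope ring_scope.

Fixpoint rms_v {R : realType} {Omega : Type} {D : nat}
  (beta2 : R) (g : nat -> 'I_D -> Omega -> R) (t : nat) (i : 'I_D) (x : Omega) : R :=
  match t with
  | 0 => 0
  | t'.+1 => beta2 * rms_v beta2 g t' i x + (1 - beta2) * (g t'.+1 i x) ^+ 2
  end.

(* Main.v *)
Require Import Defs.
From HB Require Import structures.
From mathcomp Require Import all_boot all_order all_algebra.
From mathcomp Require Import all_classical all_reals all_analysis.
From mathcomp Require Import ring lra.
Import Order.TTheory GRing.Theory Num.Theory.
Local Open Scope ring_scope.
Lemma mfun_inv_pos d (T : measurableType d) (R : realType) (h : T -> R) :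
  measurable_fun setT h -> (forall x, 0 < h x) ->
  measurable_fun setT (fun x => (h x)^-1).
Proof.
move=> mh hp.
change (measurable_fun setT ((@GRing.inv R) \o h)).
have mi : measurable_fun (`]0, +oo[%classic : set R) (@GRing.inv R).
  apply: measurable_realfun.open_continuous_measurable_fun.
    exact: interval_open.
  move=> x; rewrite inE /= in_itv /= andbT => x0.
  by apply: inv_continuous; rewrite gt_eqF.
have sub : (h @` setT `<=` (`]0, +oo[%classic : set R))%classic.
  by move=> _ [x _ <-]; rewrite /= in_itv /= andbT.
exact: (measurable_comp (measurable_itv _) sub mi mh).
Qed.

Lemma mfun_sqrt d (T : measurableType d) (R : realType) (h : T -> R) :
  measurable_fun setT h -> measurable_fun setT (fun x => Num.sqrt (h x)).
Proof.
move=> mh.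
apply: (@measurableT_comp _ _ _ _ _ _ (@Num.sqrt R)) => //.
apply: measurable_realfun.continuous_measurable_fun.
exact: sqrt_continuous.
Qed.
Lemma ln_le_sub1 (R : realType) (y : R) : 0 < y -> ln y <= y - 1.
Proof.
move=> y0; have := @le_ln1Dx R (y - 1).
rewrite addrCA subrr addr0; apply; lra.
Qed.

Lemma ln_lb (R : realType) (y : R) : 0 < y -> 1 - y^-1 <= ln y.
Proof.
move=> y0; have := @ln_le_sub1 R y^-1; rewrite invr_gt0 => /(_ y0).
rewrite lnV ?posrE //; lra.
Qed.

Lemma ln_ub (R : realType) (y c : R) : 0 < y -> 0 < c -> ln y <= ln c + y / c - 1.
Proof.
move=> y0 c0; have := @ln_le_sub1 R (y / c) (divr_gt0 y0 c0).
rewrite lnM ?posrE ?invr_gt0 // lnV ?posrE //; lra.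
Qed.

Lemma seq_bound (R : realType) (b e2 : R) (a v : nat -> R) :
  0 < b < 1 -> 0 < e2 -> v 0%N = 0 ->
  (forall t, v t.+1 = b * v t + (1 - b) * a t.+1) ->
  (forall t, 0 <= a t) -> (forall t, 0 <= v t) ->
  forall T, (1 - b) * \sum_(1 <= t < T.+1) a t / (v t + e2)
    <= ln ((v T + e2) / e2) - T%:R * ln b.
Proof.
move=> /andP[b0 b1] e0 v0 vS a0 vp; elim=> [|T IH].
  by rewrite big_geq // mulr0 v0 add0r divff ?gt_eqF // ln1 mul0r subr0.
rewrite big_nat_recr //= mulrDr.
have W0 : 0 < v T + e2 by rewrite ltr_wpDl.
have W1 : 0 < v T.+1 + e2 by rewrite ltr_wpDl.
have key : (1 - b) * (a T.+1 / (v T.+1 + e2)) <=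
    ln (v T.+1 + e2) - ln (v T + e2) - ln b.
  have y0 : 0 < (v T.+1 + e2) / (b * (v T + e2)) by rewrite divr_gt0 // mulr_gt0.
  have := @ln_lb R _ y0.
  rewrite lnM ?posrE ?invr_gt0 ?mulr_gt0 // lnV ?posrE ?mulr_gt0 //.
  rewrite lnM ?posrE // invf_div => h.
  suff : (1 - b) * (a T.+1 / (v T.+1 + e2)) <= 1 - b * (v T + e2) / (v T.+1 + e2) by lra.
  have -> : 1 - b * (v T + e2) / (v T.+1 + e2) = (v T.+1 + e2 - b * (v T + e2)) / (v T.+1 + e2).
    by field; rewrite gt_eqF.
  rewrite mulrA; apply: ler_wpM2r; first by rewrite invr_ge0 ltW.
  rewrite vS; have := a0 T.+1; nra.
have -> : ln ((v T.+1 + e2) / e2) = ln (v T.+1 + e2) - ln e2.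
  by rewrite lnM ?posrE ?invr_gt0 // lnV ?posrE.
move: IH; rewrite lnM ?posrE ?invr_gt0 // lnV ?posrE // => IH.
rewrite -natr1 mulrDl mul1r; lra.
Qed.

Section RMS.
Context d (Omega : measurableType d) (R : realType) (D : nat)
  (g : nat -> 'I_D -> Omega -> R) (b : R).

Lemma rms_ge0 t i x : 0 <= b <= 1 -> 0 <= rms_v b g t i x.
Proof.
move=> /andP[b0 b1]; elim: t => [|t IH] //=.
by rewrite addr_ge0 // mulr_ge0 // ?subr_ge0 // sqr_ge0.
Qed.

Lemma rms_meas t i : (forall t i, (0 < t)%N -> measurable_fun setT (g t i)) ->
  measurable_fun setT (rms_v b g t i).
Proof.
move=> mg; elim: t => [|t IH].
  have -> : rms_v b g 0 i = cst 0 by [].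
  exact: measurable_cst.
have -> : rms_v b g t.+1 i =
  (fun x => b * rms_v b g t i x + (1 - b) * g t.+1 i x ^+ 2) by [].
apply: measurable_realfun.measurable_funD.
  apply: measurable_realfun.measurable_funM => //; exact: measurable_cst.
apply: measurable_realfun.measurable_funM; first exact: measurable_cst.
by apply: measurable_realfun.measurable_funX; apply: mg.
Qed.

Lemma rms_sum t x : (\sum_(i < D) rms_v b g t.+1 i x) =
  b * (\sum_(i < D) rms_v b g t i x) + (1 - b) * (\sum_(i < D) g t.+1 i x ^+ 2).
Proof. by rewrite /= big_split /= !mulr_sumr. Qed.

End RMS.

Lemma rms_int d (Omega : measurableType d) (R : realType)
  (P : probability Omega R) (D : nat) (g : nat -> 'I_D -> Omega -> R) (b G : R) t :
  0 < b < 1 ->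
  (forall t i, (0 < t)%N -> measurable_fun setT (g t i)) ->
  (forall t, (0 < t)%N ->
     (\int[P]_x (\sum_(i < D) (g t i x) ^+ 2)%:E <= (G ^+ 2)%:E)%E) ->
  (\int[P]_x (\sum_(i < D) rms_v b g t i x)%:E <= ((1 - b ^+ t) * G ^+ 2)%:E)%E.
Proof.
move=> /andP[b0 b1] mg hG.
have b01 : 0 <= b <= 1 by rewrite ltW // ltW.
elim: t => [|t IH].
  have -> : (\int[P]_x (\sum_(i < D) rms_v b g 0 i x)%:E = \int[P]_x (cst 0%E x))%E.
    by apply: eq_integral => x _; rewrite /= big1.
  by rewrite integral0 expr0 subrr mul0r.
have mS : measurable_fun setT (fun x => \sum_(i < D) rms_v b g t i x).
  by apply: measurable_sum => i; apply: rms_meas.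
have mN : measurable_fun setT (fun x => \sum_(i < D) g t.+1 i x ^+ 2).
  by apply: measurable_sum => i; apply: measurable_realfun.measurable_funX; apply: mg.
have -> : (\int[P]_x (\sum_(i < D) rms_v b g t.+1 i x)%:E =
   \int[P]_x ((b%:E * (\sum_(i < D) rms_v b g t i x)%:E) +
              ((1 - b)%:E * (\sum_(i < D) g t.+1 i x ^+ 2)%:E)))%E.
  by apply: eq_integral => x _; rewrite rms_sum EFinD !EFinM.
have mSE := (measurable_realfun.measurable_EFinP _ _).2 mS.
have mNE := (measurable_realfun.measurable_EFinP _ _).2 mN.
have S0 x : 0 <= \sum_(i < D) rms_v b g t i x.
  by apply: sumr_ge0 => i _; rewrite rms_ge0.
have N0 x : 0 <= \sum_(i < D) g t.+1 i x ^+ 2.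
  by apply: sumr_ge0 => i _; rewrite sqr_ge0.
have b0' : 0 <= b by rewrite ltW.
have b1' : 0 <= 1 - b by rewrite subr_ge0 ltW.
rewrite ge0_integralD //; first last.
- exact: measurable_funeM.
- by move=> x _; rewrite -EFinM lee_fin mulr_ge0.
- exact: measurable_funeM.
- by move=> x _; rewrite -EFinM lee_fin mulr_ge0.
rewrite !ge0_integralZl_EFin //; try (by move=> x _; rewrite lee_fin).
apply: le_trans (leeD (lee_wpmul2l _ IH) (lee_wpmul2l _ (hG t.+1 _))) _ => //.
rewrite -!EFinM -EFinD lee_fin (exprS b t) le_eqVlt; apply/orP; left; apply/eqP; ring.
Qed.

Lemma pointwise d (Omega : measurableType d) (R : realType) (D : nat)
  (g : nat -> 'I_D -> Omega -> R) (b e2 M : R) (T : nat) (x : Omega) :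
  0 < b < 1 -> 0 < e2 -> 0 <= M ->
  (1 - b) * \sum_(0 <= t < T) \sum_(i < D)
      (g t.+1 i x / Num.sqrt (rms_v b g t.+1 i x + e2)) ^+ 2
  <= D%:R * (ln (1 + M / e2) - T%:R * ln b) +
     (\sum_(i < D) rms_v b g T i x - D%:R * M) / (e2 + M).
Proof.
move=> hb e0 M0; have /andP[b0 b1] := hb.
have b01 : 0 <= b <= 1 by rewrite !ltW.
have K0 : 0 < e2 + M by rewrite ltr_wpDr.
have c0 : 0 < 1 + M / e2 by rewrite ltr_wpDr // divr_ge0 // ltW.
rewrite exchange_big /= mulr_sumr.
have -> : D%:R * (ln (1 + M / e2) - T%:R * ln b) +
     (\sum_(i < D) rms_v b g T i x - D%:R * M) / (e2 + M) =
  \sum_(i < D) (ln (1 + M / e2) - T%:R * ln b + (rms_v b g T i x - M) / (e2 + M)).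
  rewrite big_split /= sumr_const card_ord -mulr_suml sumrB sumr_const card_ord.
  by rewrite -(mulr_natl (ln _ - _)) -(mulr_natl M).
apply: ler_sum => i _.
have := @seq_bound R b e2 (fun t => g t i x ^+ 2) (fun t => rms_v b g t i x).
have vp : forall t, 0 <= rms_v b g t i x by move=> t; apply: rms_ge0.
move=> /(_ hb e0 erefl (fun t => erefl) (fun t => sqr_ge0 _) vp T).
rewrite big_add1 /= => h.
have -> : \sum_(0 <= j < T) (g j.+1 i x / Num.sqrt (rms_v b g j.+1 i x + e2)) ^+ 2 =
    \sum_(0 <= j < T) g j.+1 i x ^+ 2 / (rms_v b g j.+1 i x + e2).
  apply: eq_bigr => j _; rewrite expr_div_n sqr_sqrtr //.
  by rewrite addr_ge0 ?rms_ge0 // ltW.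
apply: (le_trans h).
have y0 : 0 < (rms_v b g T i x + e2) / e2 by rewrite divr_gt0 // ltr_wpDl ?rms_ge0.
have := @ln_ub R _ _ y0 c0; rewrite -addrA.
have -> : (rms_v b g T i x + e2) / e2 / (1 + M / e2) - 1 =
    (rms_v b g T i x - M) / (e2 + M).
  by field; rewrite gt_eqF // gt_eqF.
move=> h2. lra.
Qed.

Theorem lemmaG5 (d : measure_display) (Omega : measurableType d) (R : realType)
  (P : probability Omega R) (D : nat) (g : nat -> 'I_D -> Omega -> R)
  (beta2 eps G : R) (T : nat) :
  0 < beta2 < 1 -> 0 < eps ->
  (forall t i, (0 < t)%N -> measurable_fun setT (g t i)) ->
  (forall t, (0 < t)%N ->
     (\int[P]_x (\sum_(i < D) (g t i x) ^+ 2)%:E <= (G ^+ 2)%:E)%E) ->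
  (0 < T)%N ->
  (\sum_(1 <= t < T.+1)
      \int[P]_x (\sum_(i < D)
          (g t i x / Num.sqrt (rms_v beta2 g t i x + eps ^+ 2)) ^+ 2)%:E
   <= (D%:R / (1 - beta2) *
        (ln (1 + (1 - beta2 ^+ T) * G ^+ 2 / eps ^+ 2) - T%:R * ln beta2))%:E)%E.
Proof.
move=> hb e0 mg hG T0.
have /andP[b0 b1] := hb.
have b01 : 0 <= beta2 <= 1 by rewrite !ltW.
have [D0|Dpos] := posnP D.
  subst D.
  rewrite big1 ?mul0r ?mul0r //.
  move=> t _.
  transitivity (\int[P]_x (cst 0%E x))%E; last exact: integral0.
  by apply: eq_integral => x _; rewrite big_ord0.
set e2 := eps ^+ 2.
have e2p : 0 < e2 by rewrite exprn_gt0.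
pose M := (1 - beta2 ^+ T) * G ^+ 2.
have M0 : 0 <= M by rewrite mulr_ge0 ?sqr_ge0 // subr_ge0 exprn_ile1 // ltW.
pose K := e2 + M.
have K0 : 0 < K by rewrite ltr_wpDr.
pose k := ((1 - beta2) * K)^-1.
have k0 : 0 <= k by rewrite invr_ge0 mulr_ge0 // ?subr_ge0 ltW.
pose L := ln (1 + M / e2) - T%:R * ln beta2.
have L0 : 0 <= L.
  rewrite /L subr_ge0; apply: (@le_trans _ _ 0).
    by rewrite mulr_ge0_le0 // ln_le0 // ltW.
  by rewrite ln_ge0 // lerDl divr_ge0 // ltW.
pose B := D%:R / (1 - beta2) * L.
have B0 : 0 <= B by rewrite mulr_ge0 // divr_ge0 // subr_ge0 ltW.
pose A := D%:R * M * k.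
have A0 : 0 <= A by rewrite mulr_ge0 // mulr_ge0.
pose S x := \sum_(i < D) rms_v beta2 g T i x.
pose f t x := \sum_(i < D) (g t.+1 i x / Num.sqrt (rms_v beta2 g t.+1 i x + e2)) ^+ 2.
pose F x := \sum_(0 <= t < T) f t x.
have f0 t x : 0 <= f t x by apply: sumr_ge0 => i _; rewrite sqr_ge0.
have F0 x : 0 <= F x by apply: sumr_ge0 => t _.
have S0 x : 0 <= S x by apply: sumr_ge0 => i _; rewrite rms_ge0.
have mf t : measurable_fun setT (f t).
  apply: measurable_sum => i; apply: measurable_realfun.measurable_funX.
  apply: measurable_realfun.measurable_funM; first by apply: mg.
  apply: mfun_inv_pos; last first.
    by move=> x; rewrite sqrtr_gt0 ltr_wpDl // rms_ge0.
  apply: mfun_sqrt; apply: measurable_realfun.measurable_funD.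
    exact: rms_meas.
  exact: measurable_cst.
have mF : measurable_fun setT F by apply: measurable_sum.
have mS : measurable_fun setT S by apply: measurable_sum => i; apply: rms_meas.
have mfE t := (measurable_realfun.measurable_EFinP _ _).2 (mf t).
have mFE := (measurable_realfun.measurable_EFinP _ _).2 mF.
have mSE := (measurable_realfun.measurable_EFinP _ _).2 mS.
have ptw x : F x + A <= B + k * S x.
  have := @pointwise d Omega R D g beta2 e2 M T x hb e2p M0.
  rewrite -/K -/L -/(F x) => h.
  have h' : F x <= (D%:R * L + (S x - D%:R * M) / K) / (1 - beta2).
    by rewrite ler_pdivlMr ?subr_gt0 // mulrC.
  have E : (D%:R * L + (S x - D%:R * M) / K) / (1 - beta2) =
      D%:R / (1 - beta2) * L + ((1 - beta2) * K)^-1 * S x - D%:R * M * ((1 - beta2) * K)^-1.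
    by field; rewrite ?gt_eqF ?subr_gt0.
  rewrite /A /B /k; lra.
have P1 : P [set: Omega]%classic = 1%E by exact: probability_setT.
have I1 : (\int[P]_x ((F x + A)%:E) = \int[P]_x (F x)%:E + A%:E)%E.
  transitivity (\int[P]_x ((F x)%:E + (cst A%:E) x))%E.
    by apply: eq_integral => x _; rewrite EFinD.
  rewrite ge0_integralD //.
  all: try exact: measurable_cst.
  all: try (by move=> x _; rewrite /= lee_fin).
  rewrite integral_cst //; congr (_ + _)%E; rewrite -[RHS]mule1; congr (_ * _)%E.
  exact: probability_setT.
have I2 : (\int[P]_x ((B + k * S x)%:E) = B%:E + k%:E * \int[P]_x (S x)%:E)%E.
  transitivity (\int[P]_x ((cst B%:E) x + k%:E * (S x)%:E))%E.
    by apply: eq_integral => x _; rewrite EFinD EFinM.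
  rewrite ge0_integralD //.
  all: try exact: measurable_cst.
  all: try exact: measurable_funeM.
  all: try (by move=> x _; rewrite /= lee_fin).
  all: try (by move=> x _; rewrite -EFinM lee_fin mulr_ge0).
  rewrite integral_cst // ge0_integralZl_EFin //; last by move=> x _; rewrite lee_fin.
  congr (_ + _)%E; rewrite -[RHS]mule1; congr (_ * _)%E.
  exact: probability_setT.
have I3 : (\int[P]_x (S x)%:E <= M%:E)%E.
  exact: (@rms_int d Omega R P D g beta2 G T hb mg hG).
have Ile : (\int[P]_x ((F x + A)%:E) <= \int[P]_x ((B + k * S x)%:E))%E.
  apply: ge0_le_integral => //.
  - by move=> x _; rewrite lee_fin addr_ge0.
  - exact: (measurable_realfun.measurable_EFinP _ _).2 (measurable_realfun.measurable_funD mF (measurable_cst _)).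
  - apply: (measurable_realfun.measurable_EFinP _ _).2.
    apply: measurable_realfun.measurable_funD; first exact: measurable_cst.
    by apply: measurable_realfun.measurable_funM => //; exact: measurable_cst.
  - by move=> x _; rewrite lee_fin ptw.
have kM : k * M <= A.
  have D1 : 1 <= D%:R :> R by rewrite ler1n.
  have Mk : 0 <= M * k by rewrite mulr_ge0.
  rewrite /A; nra.
have main : (\int[P]_x (F x)%:E <= B%:E)%E.
  rewrite -(@leeD2rE _ A%:E) // -I1.
  apply: (le_trans Ile); rewrite I2; apply: leeD2l.
  apply: (@le_trans _ _ (k%:E * M%:E)%E); first by rewrite lee_wpmul2l // lee_fin.
  by rewrite -EFinM lee_fin.
rewrite big_add1 /=.
rewrite -(@ge0_integral_sum _ _ _ P setT measurableT nat (fun t x => (f t x)%:E) mfE).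
  apply: le_trans main; rewrite le_eqVlt; apply/orP; left; apply/eqP.
  by apply: eq_integral => x _; rewrite sumEFin.
by move=> t x _; rewrite lee_fin.
Qed.
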